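(* Let $A$ be a finite abelian group with $A\cong H\times C$, $H$ a finite abelian group and $C$ cyclic. Let $M$ be a finite $\mathbb{Z}_p[A]$-module on which $H$ acts trivially and with $M^C\cong\mathbb{F}_p$. Then $N_{\mathrm{typical}}(A,M)$ is contained in the image of the (injective) inflation map $H^2(H,M^C)\to H^2(A,M)$.
   Context: For a finite abelian group $D$, subgroup $I$ with $D/I$ cyclic and finite $D$-module $M$: $\widehat D:=\hat{\mathbb{Z}}\times_{D/I}D$ (fiber product of the quotient maps), $R(D,I,M):=\ker(H^2(D,M)\xrightarrow{\inf}H^2(\widehat D,M))$. $\mathcal{C}$ is the set of pairs $(D,I)$ with $D\le A$ generated by at most two elements, $I\le D$ cyclic with $D/I$ cyclic. $N_{\mathrm{typical}}(A,M):=\ker\bigl(H^2(A,M)\to\bigoplus_{(D,I)\in\mathcal{C}}H^2(D,M)/R(D,I,M)\bigr)$, the maps being restrictions. *)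

(* Defs.v *)
From HB Require Import structures.
From mathcomp Require Import all_boot all_fingroup all_algebra all_solvable.
Set Implicit Arguments.
Unset Strict Implicit.
Unset Printing Implicit Defensive.
Import GRing.Theory.
Local Open Scope ring_scope.

Section Defs.
Variables (gT : finGroupType) (M : finZmodType).

Definition is_module_action (G : {set gT}) (act : gT -> M -> M) : Prop :=
  (forall m, act 1%g m = m) /\
  (forall x y m, x \in G -> y \in G -> act (x * y)%g m = act x (act y m)) /\
  (forall x m1 m2, x \in G -> act x (m1 + m2) = act x m1 + act x m2).

Definition fixedpts (act : gT -> M -> M) (C : {set gT}) : {set M} :=
  [set m : M | [forall c in C, act c m == m]].

Definition cocycle2 (G : {set gT}) (act : gT -> M -> M) (f : gT -> gT -> M) : Prop :=
  forall x y z, x \in G -> y \in G -> z \in G ->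
    act x (f y z) - f (x * y)%g z + f x (y * z)%g - f x y = 0.

Definition coboundary2 (G : {set gT}) (act : gT -> M -> M) (f : gT -> gT -> M) : Prop :=
  exists g : gT -> M, forall x y, x \in G -> y \in G ->
    f x y = act x (g y) - g (x * y)%g + g x.

(* The profinite integers Zhat = lim_n Z/(n+1): a point is a compatible family
   z with z n the residue modulo n.+1. *)
Definition zhat (z : nat -> nat) : Prop :=
  (forall n, z n < n.+1)%N /\
  (forall m n, (m.+1 %| n.+1)%N -> (z n %% m.+1)%N = z m).

Definition zhat_add (z1 z2 : nat -> nat) : nat -> nat :=
  fun n => ((z1 n + z2 n) %% n.+1)%N.

(* Dhat = Zhat x_{D/I} D, where Zhat -> D/I is the quotient map
   z |-> (x0 I)^z  (x0 I a generator of the cyclic group D/I, k = |D/I|). *)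
Definition in_Dhat (D I : {set gT}) (x0 : gT) (z : nat -> nat) (d : gT) : Prop :=
  zhat z /\ d \in D /\ d \in (x0 ^+ z (#|D : I|.-1) *: I)%g.

(* Continuity of a cochain g : Dhat -> M (M discrete) for the topology induced
   by Zhat x D (Zhat with the inverse-limit topology, D discrete): g is locally
   constant, with the basic open neighbourhoods {(z',d) | z' N = z N}. *)
Definition Dhat_continuous (D I : {set gT}) (x0 : gT)
    (g : (nat -> nat) -> gT -> M) : Prop :=
  forall z d, in_Dhat D I x0 z d ->
    exists N, forall z', in_Dhat D I x0 z' d -> z' N = z N -> g z' d = g z d.

(* The class of the 2-cocycle f (on D) lies in
   R(D,I,M) = ker(H^2(D,M) --inf--> H^2(Dhat,M)) (continuous cohomology):
   its inflation is the coboundary of a continuous 1-cochain on Dhat. *)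
Definition in_R (D I : {group gT}) (act : gT -> M -> M) (f : gT -> gT -> M) : Prop :=
  exists x0, x0 \in D /\ (D / I)%g = <[coset I x0]>%g /\
  exists g : (nat -> nat) -> gT -> M, Dhat_continuous D I x0 g /\
    forall z1 d1 z2 d2, in_Dhat D I x0 z1 d1 -> in_Dhat D I x0 z2 d2 ->
      f d1 d2 = act d1 (g z2 d2) - g (zhat_add z1 z2) (d1 * d2)%g + g z1 d1.

Definition typical_pair (A D I : {group gT}) : Prop :=
  D \subset A /\
  (exists x y, x \in A /\ y \in A /\ (D :=: <<[set x; y]>>)%g) /\
  I \subset D /\ cyclic I /\ cyclic (D / I)%g.

Definition in_Ntypical (A : {group gT}) (act : gT -> M -> M) (f : gT -> gT -> M) : Prop :=
  forall D I : {group gT}, typical_pair A D I -> in_R D I act f.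

(* inflation along the projection A = H \x C -> H  (a = h c |-> h) *)
Definition infl_dprod (H C : {set gT}) (h : gT -> gT -> M) : gT -> gT -> M :=
  fun a b => h (remgr C H a) (remgr C H b).

End Defs.

(* Main.v *)
Require Import Defs.
From HB Require Import structures.
From mathcomp Require Import all_boot all_fingroup all_algebra all_solvable.
Import GRing.Theory.
Local Open Scope ring_scope.
Set Implicit Arguments.
Unset Strict Implicit.
From Stdlib Require Import IndefiniteDescription FunctionalExtensionality.
Inductive zterm := ZAtom of nat | ZAdd of zterm & zterm | ZOpp of zterm | ZZero.

Section ZEval.
Variable V : zmodType.
Fixpoint zeval (env : seq V) (t : zterm) : V :=
  match t with
  | ZAtom n => nth 0 env n
  | ZAdd a b => zeval env a + zeval env b
  | ZOpp a => - zeval env a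
  | ZZero => 0
  end.
Fixpoint zcoef (t : zterm) (i : nat) : int :=
  match t with
  | ZAtom n => if n == i then 1 else 0
  | ZAdd a b => zcoef a i + zcoef b i
  | ZOpp a => - zcoef a i
  | ZZero => 0
  end.
Lemma zevalE env t : zeval env t = \sum_(i < size env) env`_i *~ zcoef t i.
Proof.
elim: t => [n|a IHa b IHb|a IHa|] /=.
- case: (ltnP n (size env)) => hn.
    rewrite (bigD1 (Ordinal hn)) //= eqxx mulr1z big1 ?addr0 // => i /eqP hi.
    case: eqP => [en|]; last by rewrite mulr0z.
    by case: hi; apply: val_inj; rewrite /= en.
  rewrite nth_default // big1 // => i _.
  case: eqP => [en|]; last by rewrite mulr0z.
  by have := ltn_ord i; rewrite -en ltnNge hn.
- by rewrite IHa IHb -big_split /=; apply: eq_bigr => i _; rewrite mulrzDr.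
- by rewrite IHa -sumrN; apply: eq_bigr => i _; rewrite mulrNz.
- by rewrite big1 // => i _; rewrite mulr0z.
Qed.
Lemma zeval_eq env t1 t2 :
  all (fun i => zcoef t1 i == zcoef t2 i) (iota 0 (size env)) ->
  zeval env t1 = zeval env t2.
Proof.
move/allP=> h; rewrite !zevalE; apply: eq_bigr => i _.
have hi : (i : nat) \in iota 0 (size env) by rewrite mem_iota /= add0n ltn_ord.
by rewrite (eqP (h i hi)).
Qed.
End ZEval.

Ltac zfind x l :=
  lazymatch l with
  | (?y :: ?l') =>
    match constr:(tt) with
    | _ => let _ := constr:(@erefl _ x : x = y) in constr:(0%N)
    | _ => let n := zfind x l' in constr:(S n)
    end
  end.
Ltac zcollect t l :=
  lazymatch t with
  | (?a + ?b)%R => let l1 := zcollect a l in zcollect b l1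
  | (- ?a)%R => zcollect a l
  | 0%R => l
  | _ => match constr:(tt) with
         | _ => let n := zfind t l in l
         | _ => constr:(t :: l)
         end
  end.
Ltac zreify t l :=
  lazymatch t with
  | (?a + ?b)%R => let ra := zreify a l in let rb := zreify b l in constr:(ZAdd ra rb)
  | (- ?a)%R => let ra := zreify a l in constr:(ZOpp ra)
  | 0%R => constr:(ZZero)
  | _ => let n := zfind t l in constr:(ZAtom n)
  end.
Ltac zmod_eq :=
  lazymatch goal with
  | |- @eq ?V ?l ?r =>
    let e0 := constr:(@nil V) in
    let e1 := zcollect l e0 in
    let e := zcollect r e1 in
    let tl := zreify l e in
    let tr := zreify r e in
    change (@zeval V e tl = @zeval V e tr); apply: zeval_eq; vm_compute; reflexivity
  end.

Section Aux.
Variables (gT : finGroupType) (M : finZmodType) (A : {group gT}) (act : gT -> M -> M) (f : gT -> gT -> M).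
Hypothesis hact : is_module_action A act.

Lemma act1m m : act 1%g m = m.
Proof. by case: hact. Qed.
Lemma actM x y m : x \in A -> y \in A -> act (x * y)%g m = act x (act y m).
Proof. by case: hact => _ [+ _]; apply. Qed.
Lemma actD x m1 m2 : x \in A -> act x (m1 + m2) = act x m1 + act x m2.
Proof. by case: hact => _ [_ +]; apply. Qed.
Lemma act0 x : x \in A -> act x 0 = 0.
Proof.
move=> xA; have := @actD x 0 0 xA; rewrite addr0.
move/(congr1 (fun v => v - act x 0)); rewrite subrr addrK => <-. by [].
Qed.
Lemma actN x m : x \in A -> act x (- m) = - act x m.
Proof.
move=> xA; have H : act x (- m) + act x m = 0 by rewrite -actD // addNr act0.
by apply/eqP; rewrite -addr_eq0 H.
Qed.
Lemma actB x m1 m2 : x \in A -> act x (m1 - m2) = act x m1 - act x m2.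
Proof. by move=> xA; rewrite actD // actN. Qed.

Hypothesis hf : cocycle2 A act f.

Lemma coc1l z : z \in A -> f 1%g z = f 1%g 1%g.
Proof.
move=> zA; have := @hf 1%g 1%g z (group1 A) (group1 A) zA.
rewrite !mul1g act1m subrr add0r => /eqP; rewrite subr_eq0 => /eqP //.
Qed.

Lemma cocr1 x : x \in A -> f x 1%g = act x (f 1%g 1%g).
Proof.
move=> xA; have := @hf x 1%g 1%g xA (group1 A) (group1 A).
rewrite !mulg1 subrK => /eqP; rewrite subr_eq0 => /eqP //.
Qed.

Lemma cocE x y z : x \in A -> y \in A -> z \in A ->
  act x (f y z) = f (x * y)%g z - f x (y * z)%g + f x y.
Proof.
move=> xA yA zA; have := @hf x y z xA yA zA => /eqP; rewrite subr_eq0 => /eqP <-.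
by rewrite addrCA !subrK.
Qed.

End Aux.

Section Aux2.
Variables (gT : finGroupType) (M : finZmodType) (A : {group gT}) (act : gT -> M -> M) (f : gT -> gT -> M).
Hypothesis hact : is_module_action A act.
Hypothesis hf : cocycle2 A act f.

Definition emul (u v : M * gT) : M * gT := (u.1 + act u.2 v.1 + f u.2 v.2, (u.2 * v.2)%g).

Lemma emulA u v w : u.2 \in A -> v.2 \in A -> w.2 \in A ->
  emul (emul u v) w = emul u (emul v w).
Proof.
case: u => m1 a; case: v => m2 b; case: w => m3 c /= aA bA cA.
rewrite /emul /= mulgA; congr pair.
rewrite !(actD hact) ?groupM // -(actM hact) // (cocE hf) //; zmod_eq.
Qed.

Lemma coc_cobound k : cocycle2 A act (fun a b => f a b + act a (k b) - k (a * b)%g + k a).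
Proof.
move=> x y z xA yA zA.
rewrite (actD hact) // (actB hact) // (actD hact) // -(actM hact) //.
rewrite (cocE hf) // !mulgA; zmod_eq.
Qed.

End Aux2.

Lemma module_sub (gT : finGroupType) (M : finZmodType) (A G : {group gT}) act :
  is_module_action (M:=M) A act -> G \subset A -> is_module_action G act.
Proof.
move=> [h1 [h2 h3]] sGA; split=> //; split=> *; [apply: h2 | apply: h3];
  by apply: (subsetP sGA).
Qed.

Lemma cocycle_sub (gT : finGroupType) (M : finZmodType) (A G : {group gT}) act (f : gT -> gT -> M) :
  cocycle2 A act f -> G \subset A -> cocycle2 G act f.
Proof. by move=> hf sGA x y z xG yG zG; apply: hf; apply: (subsetP sGA). Qed.

Definition zv (j : nat) : nat -> nat := fun n => (j %% n.+1)%N.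

Lemma zhat_zv j : zhat (zv j).
Proof.
split=> [n|m n dv]; first by rewrite /zv ltn_pmod.
by rewrite /zv modn_dvdm.
Qed.

Lemma zv_add i j : zhat_add (zv i) (zv j) = zv (i + j).
Proof. by apply: functional_extensionality => n; rewrite /zhat_add /zv modnDm. Qed.

Lemma in_Dhat_zv (gT : finGroupType) (D I : {group gT}) x0 j d :
  d \in D -> d \in (x0 ^+ (j %% #|D : I|) *: I)%g -> in_Dhat D I x0 (zv j) d.
Proof.
move=> dD dx; split; first exact: zhat_zv.
by split=> //; rewrite /zv prednK // indexg_gt0.
Qed.

Unset Implicit Arguments.

Theorem mainTheorem12 (gT : finGroupType) (A H C : {group gT}) (p : nat)
    (M : finZmodType) (act : gT -> M -> M) :
  abelian A -> (H \x C)%g = A -> cyclic C ->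
  prime p -> p.-nat #|M| ->
  is_module_action A act ->
  (forall h m, h \in H -> act h m = m) ->
  #|fixedpts act C| = p ->
  (* N_typical(A,M) is contained in the image of inflation H^2(H,M^C) -> H^2(A,M) *)
  (forall f : gT -> gT -> M, cocycle2 A act f -> in_Ntypical A act f ->
     exists h : gT -> gT -> M,
       cocycle2 H act h /\
       (forall x y, x \in H -> y \in H -> h x y \in fixedpts act C) /\
       coboundary2 A act (fun a b => f a b - infl_dprod H C h a b)) /\
  (* and this inflation map is injective *)
  (forall h : gT -> gT -> M,
     cocycle2 H act h ->
     (forall x y, x \in H -> y \in H -> h x y \in fixedpts act C) ->
     coboundary2 A act (infl_dprod H C h) ->
     exists g : gT -> M,
       (forall x, x \in H -> g x \in fixedpts act C) /\
       (forall x y, x \in H -> y \in H -> h x y = act x (g y) - g (x * y)%g + g x)).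
Proof.
move=> abA dpA cycC _ _ hact hH _.
have dpA' : (C \x H)%g = A by rewrite dprodC.
have [_ eHC _ _] := dprodP dpA.
have [_ eCH _ tiCH] := dprodP dpA'.
have sHA : H \subset A by rewrite -eHC mulG_subl.
have sCA : C \subset A by rewrite -eHC mulG_subr.
have inA : forall G : {group gT}, G \subset A -> forall x, x \in G -> x \in A.
  by move=> G sGA x; apply: (subsetP sGA).
have comA : forall x y, x \in A -> y \in A -> (x * y = y * x)%g.
  by move=> x y xA yA; apply: (centsP abA).
have xpH : forall a, a \in A -> remgr C H a \in H.
  by move=> a aA; apply: mem_remgr; rewrite eCH.
have dpC : forall a, a \in A -> divgr C H a \in C.
  by move=> a aA; apply: mem_divgr; rewrite eCH.
have xpid : forall x, x \in H -> remgr C H x = x by move=> x; apply: remgr_id.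
have xp1 : forall d, d \in C -> remgr C H d = 1%g by move=> d; apply: remgr1.
have hHA := module_sub hact sHA.
split.
- move=> f hf hN.
  have [c defC] := cyclicP cycC.
  have cC : c \in C by rewrite defC cycle_id.
  have cA : c \in A := inA _ sCA _ cC.
  have nCA : A \subset 'N(C)%g := sub_abelian_norm abA sCA.
  have key : forall x, x \in H -> exists G0 : gT -> M,
      (forall d1 d2, d1 \in C -> d2 \in C ->
         f d1 d2 = act d1 (G0 d2) - G0 (d1 * d2)%g + G0 d1) /\
      exists w : M, forall d, d \in C -> w + f x d = act d w + f d x.
    move=> x xH; have xA := inA _ sHA _ xH.
    pose D := <<[set x; c]>>%G.
    have sSA : ([set x; c] \subset A)%g.
      by apply/subsetP => y; rewrite !inE => /orP[]/eqP->.
    have sDA : D \subset A by rewrite gen_subG.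
    have cD : c \in D by rewrite mem_gen // !inE eqxx orbT.
    have xD : x \in D by rewrite mem_gen // !inE eqxx.
    have sCD : (C \subset D)%g by rewrite defC cycle_subG.
    have nCD : D \subset 'N(C)%g := subset_trans sDA nCA.
    have nCx : x \in 'N(C)%g := subsetP nCA x xA.
    have cycDC : cyclic (D / C)%g.
      apply: (cyclicS _ (cycle_cyclic (coset C x))).
      suff : (D / C \subset <[coset C x]>)%g by [].
      have e1 : ((<[x]> <*> C) / C)%g = <[coset C x]>%g.
        by rewrite quotientYidr ?cycle_subG // quotient_cycle.
      rewrite -e1; apply: quotientS.
      rewrite /D /= gen_subG; apply/subsetP => y; rewrite !inE => /orP[]/eqP->.
        by apply: (subsetP (joing_subl _ _)); apply: cycle_id.
      exact: (subsetP (joing_subr _ _)).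
    have tp : typical_pair A D C.
      split=> //; split; first by exists x, c.
      by split=> //; split=> //; rewrite defC cycle_cyclic.
    have [x0 [x0D [DC [g [_ hg]]]]] := hN D C tp.
    have x0A : x0 \in A := subsetP sDA x0 x0D.
    have hd : forall d, d \in C -> in_Dhat D C x0 (zv 0) d.
      move=> d dC; apply: in_Dhat_zv; first exact: (subsetP sCD).
      by rewrite mod0n expg0 mem_lcoset invg1 mul1g.
    exists (g (zv 0)); split.
      move=> d1 d2 d1C d2C.
      by rewrite (hg _ _ _ _ (hd _ d1C) (hd _ d2C)) zv_add addn0.
    have xq : coset C x \in <[coset C x0]>%g by rewrite -DC mem_quotient.
    have [j jlt ej] := cyclePmin xq.
    have ordk : #[coset C x0]%g = #|D : C|%g by rewrite /order -DC card_quotient.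
    have x0N : x0 \in 'N(C)%g := subsetP nCA x0 x0A.
    have xin : x \in (x0 ^+ (j %% #|D : C|%g) *: C)%g.
      rewrite -ordk modn_small // mem_lcoset.
      have : x \in (C :* x0 ^+ j)%g.
        apply/rcoset_kercosetP => //; first by rewrite groupX.
        by rewrite (morphX _ _ x0N) -ej.
      rewrite mem_rcoset => hx.
      by rewrite (comA _ x _ xA) // groupV groupX.
    have hx : in_Dhat D C x0 (zv j) x := in_Dhat_zv xD xin.
    exists (- g (zv j) x) => d dC.
    have dA := inA _ sCA _ dC.
    rewrite (hg _ _ _ _ hx (hd _ dC)) (hg _ _ _ _ (hd _ dC) hx) !zv_add addn0 add0n.
    rewrite (hH x _ xH) (actN hact _ dA) (comA x d xA dA); zmod_eq.
  have [G0 [hG0 _]] := key 1%g (group1 H).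
  have [w hw] : exists w : gT -> M, forall x, x \in H -> forall d, d \in C ->
      w x + f x d = act d (w x) + f d x.
    apply: (functional_choice (fun x w => x \in H -> forall d, d \in C ->
      w + f x d = act d w + f d x)) => x.
    case: (boolP (x \in H)) => xH; last by exists 0.
    by have [G0' [_ [w' hw']]] := key x xH; exists w'.
  pose s x := (w x, x).
  pose r d := (- G0 d, d).
  pose k a := (emul act f (s (remgr C H a)) (r (divgr C H a))).1.
  pose Phi x y := w x + w y + f x y - w (x * y)%g.
  have eA := emulA hact hf.
  have hr : forall d d', d \in C -> d' \in C -> emul act f (r d) (r d') = r (d * d')%g.
    move=> d d' dC d'C; rewrite /emul /=; congr pair.
    by rewrite hG0 // (actN hact _ (inA _ sCA _ dC)); zmod_eq.
  have hc : forall x d, x \in H -> d \in C -> emul act f (s x) (r d) = emul act f (r d) (s x).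
    move=> x d xH dC; rewrite /emul /=; congr pair.
      by rewrite (hH x _ xH) addrAC hw //; zmod_eq.
    by apply: comA; [apply: (inA _ sHA) | apply: (inA _ sCA)].
  have claim : forall a b, a \in A -> b \in A ->
      f a b + act a (k b) - k (a * b)%g + k a = Phi (remgr C H a) (remgr C H b).
    move=> a b aA bA.
    have xH := xpH a aA; have yH := xpH b bA; have dC := dpC a aA; have d'C := dpC b bA.
    set x := remgr C H a in xH *; set y := remgr C H b in yH *.
    set d := divgr C H a in dC *; set d' := divgr C H b in d'C *.
    have xA := inA _ sHA _ xH; have yA := inA _ sHA _ yH.
    have dA := inA _ sCA _ dC; have d'A := inA _ sCA _ d'C.
    have ea : a = (d * x)%g := divgr_eq C H a.
    have eb : b = (d' * y)%g := divgr_eq C H b.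
    have eab : (a * b = (d * d') * (x * y))%g.
      by rewrite ea eb mulgA -(mulgA d) (comA x d' xA d'A) !mulgA.
    have xab : remgr C H (a * b)%g = (x * y)%g by rewrite eab (remgrMid tiCH) //; apply: groupM.
    have dab : divgr C H (a * b)%g = (d * d')%g by rewrite eab (divgrMid tiCH) //; apply: groupM.
    have ta : emul act f (s x) (r d) = (k a, a).
      by rewrite [LHS]surjective_pairing /= (comA x d xA dA) -ea.
    have tb : emul act f (s y) (r d') = (k b, b).
      by rewrite [LHS]surjective_pairing /= (comA y d' yA d'A) -eb.
    have tab : k (a * b)%g = w (x * y)%g + act (x * y)%g (- G0 (d * d')%g) + f (x * y)%g (d * d')%g.
      by rewrite /k xab dab.
    have chain : emul act f (k a, a) (k b, b) = emul act f (emul act f (s x) (s y)) (r (d * d')%g).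
      rewrite -ta -tb.
      rewrite eA //=; last by apply: groupM.
      rewrite -(eA (r d) (s y) (r d')) //=.
      rewrite -(hc y d yH dC).
      rewrite (eA (s y) (r d) (r d')) //=.
      rewrite hr //.
      by rewrite -(eA (s x) (s y) (r (d * d')%g)) //=; apply: groupM.
    have E := congr1 fst chain; rewrite /= in E.
    transitivity (k a + act a (k b) + f a b - k (a * b)%g); first by zmod_eq.
    rewrite E tab (hH x _ xH) /Phi; zmod_eq.
  have hF := coc_cobound hact hf k.
  have hF1 := coc1l hact hF.
  exists Phi; split; [|split].
  - move=> x y z xH yH zH.
    have xA := inA _ sHA _ xH; have yA := inA _ sHA _ yH; have zA := inA _ sHA _ zH.
    have := hF x y z xA yA zA => /=.
    rewrite !claim ?groupM // !xpid ?groupM //.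
  - move=> x y xH yH; rewrite inE; apply/forallP => d; apply/implyP => dC; apply/eqP.
    have xA := inA _ sHA _ xH; have yA := inA _ sHA _ yH; have dA := inA _ sCA _ dC.
    have P1 : forall z, z \in H -> Phi 1%g z = Phi 1%g 1%g.
      move=> z zH; have zA := inA _ sHA _ zH.
      have := hF1 z zA; rewrite /= !claim ?group1 //.
      by rewrite (xp1 1%g (group1 C)) (xpid z zH).
    have := hF d x y dA xA yA => /=.
    rewrite !claim ?groupM // (xp1 d dC) (xpid x xH) (xpid y yH) (remgrMid tiCH) //.
    rewrite xpid ?groupM // P1 ?groupM // P1 // => E.
    have -> : act d (Phi x y) = (act d (Phi x y) - Phi x y + Phi 1%g 1%g - Phi 1%g 1%g) + Phi x y by zmod_eq.
    by rewrite E add0r.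
  - exists (fun a => - k a) => a b aA bA.
    rewrite /infl_dprod -(claim a b aA bA) (actN hact _ aA); zmod_eq.
- move=> h hh hfx [g hg].
  exists g; split; last first.
    move=> x y xH yH; have := hg x y (inA _ sHA _ xH) (inA _ sHA _ yH).
    by rewrite /infl_dprod !xpid.
  move=> x xH; rewrite inE; apply/forallP => d; apply/implyP => dC; apply/eqP.
  have xA := inA _ sHA _ xH; have dA := inA _ sCA _ dC.
  have E1 := hg d x dA xA; have E2 := hg x d xA dA.
  rewrite /infl_dprod (xpid x xH) (xp1 d dC) in E1 E2.
  rewrite (coc1l hHA hh xH) in E1.
  rewrite (cocr1 hh xH) !hH // (comA x d xA dA) in E2.
  have -> : act d (g x) = h 1%g 1%g + g (d * x)%g - g d by rewrite E1; zmod_eq.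
  rewrite E2; zmod_eq.
Qed.
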